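(* Fix $r\in\mathbb R$ and let $\rho>0$. For $\theta\in[0,\pi]$, the function $\theta\mapsto\Re\,g_0(\rho e^{i\theta},0,r)$ is decreasing where $$\cos\theta<\frac{1+\rho^2}{2\sqrt2\,\rho}$$ holds and increasing where it does not hold; for $\theta\in[\pi,2\pi]$ the opposite is true. Let $R>0$. For $\phi\in[0,\pi]$, the function $\phi\mapsto-\Re\,g_0(1-Re^{-i\phi},0,r)$ is decreasing where $Q>0$ and increasing where $Q<0$, where $$Q=6\sqrt2-4+(3\sqrt2+2)R^2+16r+4R^2r-8\sqrt2R(1+\sqrt2r)\cos\phi;$$ for $\phi\in[\pi,2\pi]$ the opposite is true. (Monotonicity is meant on intervals avoiding the points $0,\pm1$ where $g_0$ is singular.)
   Context: For $z\in\mathbb C\setminus\{0,1,-1\}$ and $s,r\in\mathbb R$, $$g_0(z,s,r)=\Big(\tfrac1{2\sqrt2}-\tfrac12-s+r\Big)\log z+\Big(\tfrac12-\tfrac1{2\sqrt2}-s\Big)\log(1-z)+\Big(\tfrac12+\tfrac1{2\sqrt2}+s\Big)\log(1+z)+(r-2s)\log(\sqrt2+1)-\tfrac{\log2}{2};$$ its real part does not depend on the choice of branches of the logarithms. *)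

(* Defs.v *)
From Stdlib Require Import Reals Lra.
From Coquelicot Require Import Coquelicot.
Open Scope R_scope.

(* Real part of g_0(z,s,r).  Since Re (log w) = ln |w| for every branch of
   the logarithm, the real part of g_0 is literally the following. *)
Definition re_g0 (z : C) (s r : R) : R :=
  (1 / (2 * sqrt 2) - 1 / 2 - s + r) * ln (Cmod z)
  + (1 / 2 - 1 / (2 * sqrt 2) - s) * ln (Cmod (Cminus (RtoC 1) z))
  + (1 / 2 + 1 / (2 * sqrt 2) + s) * ln (Cmod (Cplus (RtoC 1) z))
  + (r - 2 * s) * ln (sqrt 2 + 1) - ln 2 / 2.

Definition cis (t : R) : C := (cos t, sin t).

Definition nonsingular (z : C) : Prop :=
  z <> RtoC 0 /\ z <> RtoC 1 /\ z <> RtoC (-1).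

Definition decreasing_on (f : R -> R) (a b : R) : Prop :=
  forall x y, a <= x -> x < y -> y <= b -> f y < f x.
Definition increasing_on (f : R -> R) (a b : R) : Prop :=
  forall x y, a <= x -> x < y -> y <= b -> f x < f y.

Definition Qfun (R0 r phi : R) : R :=
  6 * sqrt 2 - 4 + (3 * sqrt 2 + 2) * R0 ^ 2 + 16 * r + 4 * R0 ^ 2 * r
  - 8 * sqrt 2 * R0 * (1 + sqrt 2 * r) * cos phi.

(* Main.v *)
Require Import Defs.
From Stdlib Require Import Reals Lra.
From Coquelicot Require Import Coquelicot.
Open Scope R_scope.

Lemma ln_sqrt_pos X : 0 < X -> ln (sqrt X) = ln X / 2.
Proof.
  intro H. assert (Hs := sqrt_lt_R0 X H).
  rewrite <- (sqrt_sqrt X) at 2 by lra. rewrite ln_mult by lra. lra.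
Qed.

Definition H2 al p1 q1 be p2 q2 c := al * ln (p1+q1*c) + be * ln (p2+q2*c).

Lemma H2_deriv al p1 q1 be p2 q2 c : 0 < p1+q1*c -> 0 < p2+q2*c ->
  derivable_pt_lim (H2 al p1 q1 be p2 q2) c
    (al*q1/(p1+q1*c) + be*q2/(p2+q2*c)).
Proof.
  intros h1 h2. apply is_derive_Reals. unfold H2.
  auto_derive. { split; [lra|split; [lra|auto]]. }
  field. lra.
Qed.

Lemma lin_pos p q c1 c2 x : c1 <= x <= c2 -> 0 < p + q*c1 -> 0 < p + q*c2 -> 0 < p + q*x.
Proof.
  intros [h1 h2] a b. destruct (Rle_lt_dec 0 q).
  - nra.
  - nra.
Qed.

Lemma H2_mono al p1 q1 be p2 q2 c1 c2 : c1 < c2 ->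
  0 < p1+q1*c1 -> 0 < p1+q1*c2 -> 0 < p2+q2*c1 -> 0 < p2+q2*c2 ->
  ((forall x, c1 < x < c2 -> 0 < al*q1*(p2+q2*x) + be*q2*(p1+q1*x)) ->
    H2 al p1 q1 be p2 q2 c1 < H2 al p1 q1 be p2 q2 c2) /\
  ((forall x, c1 < x < c2 -> al*q1*(p2+q2*x) + be*q2*(p1+q1*x) < 0) ->
    H2 al p1 q1 be p2 q2 c2 < H2 al p1 q1 be p2 q2 c1).
Proof.
  intros hc a1 a2 b1 b2.
  destruct (MVT_cor2 (H2 al p1 q1 be p2 q2)
    (fun c => al*q1/(p1+q1*c) + be*q2/(p2+q2*c)) c1 c2 hc) as [x [Heq Hx]].
  { intros c hcc. apply H2_deriv; eapply lin_pos; eauto. }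
  assert (d1 : 0 < p1+q1*x) by (eapply lin_pos; [|exact a1|exact a2]; lra).
  assert (d2 : 0 < p2+q2*x) by (eapply lin_pos; [|exact b1|exact b2]; lra).
  assert (E : al*q1/(p1+q1*x) + be*q2/(p2+q2*x) =
     (al*q1*(p2+q2*x) + be*q2*(p1+q1*x)) * / ((p1+q1*x)*(p2+q2*x))).
  { field. lra. }
  rewrite E in Heq.
  assert (hi : 0 < / ((p1+q1*x)*(p2+q2*x))).
  { apply Rinv_0_lt_compat; nra. }
  split; intro HN; specialize (HN x Hx).
  - assert (0 < (al*q1*(p2+q2*x) + be*q2*(p1+q1*x)) * / ((p1+q1*x)*(p2+q2*x)) * (c2 - c1)).
    { apply Rmult_lt_0_compat; [apply Rmult_lt_0_compat|]; lra. }
    lra.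
  - assert (0 < - ((al*q1*(p2+q2*x) + be*q2*(p1+q1*x)) * / ((p1+q1*x)*(p2+q2*x))) * (c2 - c1)).
    { apply Rmult_lt_0_compat; [|lra]. rewrite Ropp_mult_distr_l. apply Rmult_lt_0_compat; lra. }
    lra.
Qed.

Lemma nz_pos (z : C) a : z <> RtoC a -> 0 < (fst z - a)^2 + snd z ^2.
Proof.
  intro H. destruct z as [x y]. simpl.
  destruct (Req_dec x a); destruct (Req_dec y 0).
  - exfalso. apply H. subst. reflexivity.
  - assert (y*y > 0) by (apply Rsqr_pos_lt; auto). nra.
  - assert ((x-a)*(x-a) > 0) by (apply Rsqr_pos_lt; lra). nra.
  - assert (y*y > 0) by (apply Rsqr_pos_lt; auto). nra.
Qed.
Lemma sq2_pos : 0 < sqrt 2.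
Proof. apply sqrt_lt_R0; lra. Qed.

Lemma eq_by (L Rr k e : R) : e = 0 -> L - Rr = k * e -> L = Rr.
Proof. intros h1 h2. rewrite h1 in h2. lra. Qed.

Lemma sc t : sin t ^ 2 + cos t ^ 2 - 1 = 0.
Proof. pose proof (sin2_cos2 t). unfold Rsqr in H. simpl. lra. Qed.

Section P1.
Variables (rho r t : R).
Hypothesis hrho : 0 < rho.
Let z := Cmult (RtoC rho) (cis t).

Lemma z_fst : fst z = rho * cos t.
Proof. unfold z, Cmult, RtoC, cis. simpl. ring. Qed.
Lemma z_snd : snd z = rho * sin t.
Proof. unfold z, Cmult, RtoC, cis. simpl. ring. Qed.

Lemma p1_pos1 : nonsingular z -> 0 < 1 + rho^2 + (-2*rho) * cos t.
Proof.
  intros [_ [h _]]. pose proof (nz_pos z 1 h) as H. rewrite z_fst, z_snd in H.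
  replace (1 + rho^2 + (-2*rho) * cos t) with ((rho * cos t - 1) ^ 2 + (rho * sin t) ^ 2); auto.
  apply (eq_by _ _ (rho^2) _ (sc t)). ring.
Qed.
Lemma p1_pos2 : nonsingular z -> 0 < 1 + rho^2 + (2*rho) * cos t.
Proof.
  intros [_ [_ h]]. pose proof (nz_pos z (-1) h) as H. rewrite z_fst, z_snd in H.
  replace (1 + rho^2 + (2*rho) * cos t) with ((rho * cos t - -1) ^ 2 + (rho * sin t) ^ 2); auto.
  apply (eq_by _ _ (rho^2) _ (sc t)). ring.
Qed.

Lemma p1_rep : nonsingular z ->
  re_g0 z 0 r = (1 / (2 * sqrt 2) - 1 / 2 - 0 + r) * ln rho
     + ((r - 2 * 0) * ln (sqrt 2 + 1) - ln 2 / 2)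
     + H2 ((1 / 2 - 1 / (2 * sqrt 2) - 0)/2) (1 + rho^2) (-2*rho)
          ((1 / 2 + 1 / (2 * sqrt 2) + 0)/2) (1 + rho^2) (2*rho) (cos t).
Proof.
  intro hn. pose proof (p1_pos1 hn). pose proof (p1_pos2 hn).
  unfold re_g0.
  assert (E0 : Cmod z = rho).
  { unfold Cmod. rewrite z_fst, z_snd.
    replace ((rho * cos t) ^ 2 + (rho * sin t) ^ 2) with (rho ^ 2).
    apply sqrt_pow2; lra. symmetry. apply (eq_by _ _ (rho^2) _ (sc t)). ring. }
  assert (E1 : Cmod (Cminus (RtoC 1) z) = sqrt (1 + rho^2 + (-2*rho) * cos t)).
  { unfold Cmod. f_equal. unfold Cminus, Cplus, Copp, RtoC. cbn [fst snd]. rewrite z_fst, z_snd.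
    apply (eq_by _ _ (rho^2) _ (sc t)). ring. }
  assert (E2 : Cmod (Cplus (RtoC 1) z) = sqrt (1 + rho^2 + (2*rho) * cos t)).
  { unfold Cmod. f_equal. unfold Cplus, RtoC. cbn [fst snd]. rewrite z_fst, z_snd. idtac.
    apply (eq_by _ _ (rho^2) _ (sc t)). ring. }
  rewrite E0, E1, E2, !ln_sqrt_pos by lra. unfold H2. pose proof sq2_pos; field; lra.
Qed.
End P1.

Lemma N1_eq rho x : 0 < rho ->
  (1 / 2 - 1 / (2 * sqrt 2) - 0)/2 * (-2*rho) * (1 + rho^2 + (2*rho)*x)
  + (1 / 2 + 1 / (2 * sqrt 2) + 0)/2 * (2*rho) * (1 + rho^2 + (-2*rho)*x)
  = rho * (1 + rho^2 - 2 * sqrt 2 * rho * x) / sqrt 2.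
Proof. intro. pose proof sq2_pos. field. lra. Qed.

Lemma cond_iff rho x : 0 < rho ->
  (x < (1 + rho ^ 2) / (2 * sqrt 2 * rho) <-> 0 < 1 + rho^2 - 2 * sqrt 2 * rho * x).
Proof.
  intro h. pose proof sq2_pos. assert (hd : 0 < 2 * sqrt 2 * rho) by nra.
  split; intro H1.
  - apply (Rmult_lt_compat_r (2 * sqrt 2 * rho)) in H1; auto.
    replace ((1 + rho ^ 2) / (2 * sqrt 2 * rho) * (2 * sqrt 2 * rho)) with (1 + rho^2) in H1 by (field; lra). lra.
  - apply (Rmult_lt_reg_r (2 * sqrt 2 * rho)); auto.
    replace ((1 + rho ^ 2) / (2 * sqrt 2 * rho) * (2 * sqrt 2 * rho)) with (1 + rho^2) by (field; lra). lra.
Qed.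
Definition h1 rho := H2 ((1 / 2 - 1 / (2 * sqrt 2) - 0)/2) (1 + rho^2) (-2*rho)
          ((1 / 2 + 1 / (2 * sqrt 2) + 0)/2) (1 + rho^2) (2*rho).

Lemma h1_mono rho c1 c2 : 0 < rho -> c1 < c2 ->
  0 < 1 + rho^2 + (-2*rho)*c1 -> 0 < 1 + rho^2 + (-2*rho)*c2 ->
  0 < 1 + rho^2 + (2*rho)*c1 -> 0 < 1 + rho^2 + (2*rho)*c2 ->
  ((forall x, c1 < x < c2 -> 0 < 1 + rho^2 - 2 * sqrt 2 * rho * x) -> h1 rho c1 < h1 rho c2) /\
  ((forall x, c1 < x < c2 -> 1 + rho^2 - 2 * sqrt 2 * rho * x < 0) -> h1 rho c2 < h1 rho c1).
Proof.
  intros hr hc a1 a2 b1 b2. pose proof sq2_pos.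
  destruct (H2_mono ((1 / 2 - 1 / (2 * sqrt 2) - 0)/2) (1 + rho^2) (-2*rho)
          ((1 / 2 + 1 / (2 * sqrt 2) + 0)/2) (1 + rho^2) (2*rho) c1 c2 hc a1 a2 b1 b2) as [P N].
  split; intro HH.
  - apply P. intros x hx. rewrite N1_eq by auto. specialize (HH x hx).
    apply Rdiv_lt_0_compat; nra.
  - apply N. intros x hx. rewrite N1_eq by auto. specialize (HH x hx).
    unfold Rdiv. assert (0 < / sqrt 2) by (apply Rinv_0_lt_compat; auto).
    assert (rho * (1 + rho ^ 2 - 2 * sqrt 2 * rho * x) < 0) by nra. nra.
Qed.

Lemma part1 r rho : 0 < rho ->
   let f := fun t : R => re_g0 (Cmult (RtoC rho) (cis t)) 0 r in
   let cond := fun t : R => cos t < (1 + rho ^ 2) / (2 * sqrt 2 * rho) in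
   forall a b : R, a < b ->
   (forall t, a <= t <= b -> nonsingular (Cmult (RtoC rho) (cis t))) ->
   ((0 <= a /\ b <= PI) ->
      ((forall t, a <= t <= b -> cond t) -> decreasing_on f a b) /\
      ((forall t, a <= t <= b -> ~ cond t) -> increasing_on f a b)) /\
   ((PI <= a /\ b <= 2 * PI) ->
      ((forall t, a <= t <= b -> cond t) -> increasing_on f a b) /\
      ((forall t, a <= t <= b -> ~ cond t) -> decreasing_on f a b)).
Proof.
  intros hrho f cond a b hab hns. pose proof sq2_pos.
  assert (kpos : 0 < 2 * sqrt 2 * rho) by nra.
  assert (rep : forall t, a <= t <= b -> f t =
     (1 / (2 * sqrt 2) - 1 / 2 - 0 + r) * ln rho
     + ((r - 2 * 0) * ln (sqrt 2 + 1) - ln 2 / 2) + h1 rho (cos t)).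
  { intros t ht. unfold f, h1. apply p1_rep; auto. }
  assert (pos : forall t, a <= t <= b -> 0 < 1 + rho^2 + (-2*rho)*cos t /\ 0 < 1 + rho^2 + (2*rho)*cos t).
  { intros t ht. split; [apply p1_pos1|apply p1_pos2]; auto. }
  assert (ci : forall t, cond t <-> 0 < 1 + rho^2 - 2 * sqrt 2 * rho * cos t).
  { intro t. unfold cond. apply cond_iff; auto. }
  split; intros [ha hb]; split; intros HC x y hx hxy hy;
    assert (hx' : a <= x <= b) by lra; assert (hy' : a <= y <= b) by lra;
    rewrite (rep x hx'), (rep y hy');
    destruct (pos x hx') as [px1 px2]; destruct (pos y hy') as [py1 py2];
    pose proof (HC x hx') as Cx; pose proof (HC y hy') as Cy;
    rewrite ci in Cx, Cy.
  - assert (hcos : cos y < cos x) by (apply cos_decreasing_1; lra).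
    destruct (h1_mono rho (cos y) (cos x) hrho hcos py1 px1 py2 px2) as [P _].
    enough (h1 rho (cos y) < h1 rho (cos x)) by lra. apply P.
    intros z hz. nra.
  - assert (hcos : cos y < cos x) by (apply cos_decreasing_1; lra).
    destruct (h1_mono rho (cos y) (cos x) hrho hcos py1 px1 py2 px2) as [_ N].
    enough (h1 rho (cos x) < h1 rho (cos y)) by lra. apply N.
    intros z hz. nra.
  - assert (hcos : cos x < cos y) by (apply cos_increasing_1; lra).
    destruct (h1_mono rho (cos x) (cos y) hrho hcos px1 py1 px2 py2) as [P _].
    enough (h1 rho (cos x) < h1 rho (cos y)) by lra. apply P.
    intros z hz. nra.
  - assert (hcos : cos x < cos y) by (apply cos_increasing_1; lra).
    destruct (h1_mono rho (cos x) (cos y) hrho hcos px1 py1 px2 py2) as [_ N].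
    enough (h1 rho (cos y) < h1 rho (cos x)) by lra. apply N.
    intros z hz. nra.
Qed.
Section P2.
Variables (R0 r phi : R).
Hypothesis hR : 0 < R0.
Let z := Cminus (RtoC 1) (Cmult (RtoC R0) (cis (- phi))).

Lemma w_fst : fst z = 1 - R0 * cos phi.
Proof. unfold z, Cminus, Cplus, Copp, Cmult, RtoC, cis. simpl. rewrite cos_neg, sin_neg. ring. Qed.
Lemma w_snd : snd z = R0 * sin phi.
Proof. unfold z, Cminus, Cplus, Copp, Cmult, RtoC, cis. simpl. rewrite cos_neg, sin_neg. ring. Qed.

Lemma p2_pos1 : nonsingular z -> 0 < 1 + R0^2 + (-2*R0) * cos phi.
Proof.
  intros [h _]. pose proof (nz_pos z 0 h) as H. rewrite w_fst, w_snd in H.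
  replace (1 + R0^2 + (-2*R0) * cos phi) with ((1 - R0 * cos phi - 0) ^ 2 + (R0 * sin phi) ^ 2); auto.
  apply (eq_by _ _ (R0^2) _ (sc phi)). ring.
Qed.
Lemma p2_pos2 : nonsingular z -> 0 < 4 + R0^2 + (-4*R0) * cos phi.
Proof.
  intros [_ [_ h]]. pose proof (nz_pos z (-1) h) as H. rewrite w_fst, w_snd in H.
  replace (4 + R0^2 + (-4*R0) * cos phi) with ((1 - R0 * cos phi - -1) ^ 2 + (R0 * sin phi) ^ 2); auto.
  apply (eq_by _ _ (R0^2) _ (sc phi)). ring.
Qed.

Lemma p2_rep : nonsingular z ->
  - re_g0 z 0 r = - ((1 / 2 - 1 / (2 * sqrt 2) - 0) * ln R0
     + ((r - 2 * 0) * ln (sqrt 2 + 1) - ln 2 / 2))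
     + H2 (- (1 / (2 * sqrt 2) - 1 / 2 - 0 + r)/2) (1 + R0^2) (-2*R0)
          (- (1 / 2 + 1 / (2 * sqrt 2) + 0)/2) (4 + R0^2) (-4*R0) (cos phi).
Proof.
  intro hn. pose proof (p2_pos1 hn). pose proof (p2_pos2 hn).
  unfold re_g0.
  assert (E0 : Cmod z = sqrt (1 + R0^2 + (-2*R0) * cos phi)).
  { unfold Cmod. f_equal. rewrite w_fst, w_snd.
    apply (eq_by _ _ (R0^2) _ (sc phi)). ring. }
  assert (E1 : Cmod (Cminus (RtoC 1) z) = R0).
  { unfold Cmod. unfold Cminus, Cplus, Copp, RtoC. cbn [fst snd]. rewrite w_fst, w_snd.
    replace ((1 + - (1 - R0 * cos phi)) ^ 2 + (0 + - (R0 * sin phi)) ^ 2) with (R0 ^ 2).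
    apply sqrt_pow2; lra. symmetry. apply (eq_by _ _ (R0^2) _ (sc phi)). ring. }
  assert (E2 : Cmod (Cplus (RtoC 1) z) = sqrt (4 + R0^2 + (-4*R0) * cos phi)).
  { unfold Cmod. f_equal. unfold Cplus, RtoC. cbn [fst snd]. rewrite w_fst, w_snd.
    apply (eq_by _ _ (R0^2) _ (sc phi)). ring. }
  rewrite E0, E1, E2, !ln_sqrt_pos by lra. unfold H2. pose proof sq2_pos; field; lra.
Qed.
End P2.
Definition h2 R0 r := H2 (- (1 / (2 * sqrt 2) - 1 / 2 - 0 + r)/2) (1 + R0^2) (-2*R0)
          (- (1 / 2 + 1 / (2 * sqrt 2) + 0)/2) (4 + R0^2) (-4*R0).

Definition Qp R0 r := 6 * sqrt 2 - 4 + (3 * sqrt 2 + 2) * R0 ^ 2 + 16 * r + 4 * R0 ^ 2 * r.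
Definition Qq R0 r := - (8 * sqrt 2 * R0 * (1 + sqrt 2 * r)).

Lemma Qfun_lin R0 r phi : Qfun R0 r phi = Qp R0 r + Qq R0 r * cos phi.
Proof. unfold Qfun, Qp, Qq. ring. Qed.

Lemma inv_s : 1 / (2 * sqrt 2) = sqrt 2 / 4.
Proof.
  pose proof sq2_pos. pose proof (sqrt_sqrt 2 ltac:(lra)).
  apply (eq_by _ _ (/ (4 * sqrt 2)) (2 - sqrt 2 * sqrt 2)); [lra|field; lra].
Qed.

Lemma N2_eq R0 r x :
  (- (1 / (2 * sqrt 2) - 1 / 2 - 0 + r)/2) * (-2*R0) * (4 + R0^2 + (-4*R0)*x)
  + (- (1 / 2 + 1 / (2 * sqrt 2) + 0)/2) * (-4*R0) * (1 + R0^2 + (-2*R0)*x)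
  = R0 * (Qp R0 r + Qq R0 r * x) / 4.
Proof.
  pose proof (sqrt_sqrt 2 ltac:(lra)).
  rewrite inv_s. unfold Qp, Qq.
  apply (eq_by _ _ (2 * R0^2 * r * x) (sqrt 2 * sqrt 2 - 2)); [lra|field].
Qed.

Lemma h2_mono R0 r c1 c2 : 0 < R0 -> c1 < c2 ->
  0 < 1 + R0^2 + (-2*R0)*c1 -> 0 < 1 + R0^2 + (-2*R0)*c2 ->
  0 < 4 + R0^2 + (-4*R0)*c1 -> 0 < 4 + R0^2 + (-4*R0)*c2 ->
  ((forall x, c1 < x < c2 -> 0 < Qp R0 r + Qq R0 r * x) -> h2 R0 r c1 < h2 R0 r c2) /\
  ((forall x, c1 < x < c2 -> Qp R0 r + Qq R0 r * x < 0) -> h2 R0 r c2 < h2 R0 r c1).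
Proof.
  intros hr hc a1 a2 b1 b2.
  destruct (H2_mono (- (1 / (2 * sqrt 2) - 1 / 2 - 0 + r)/2) (1 + R0^2) (-2*R0)
          (- (1 / 2 + 1 / (2 * sqrt 2) + 0)/2) (4 + R0^2) (-4*R0) c1 c2 hc a1 a2 b1 b2) as [P N].
  split; intro HH.
  - apply P. intros x hx. rewrite N2_eq. specialize (HH x hx). nra.
  - apply N. intros x hx. rewrite N2_eq. specialize (HH x hx). nra.
Qed.

Lemma lin_neg p q c1 c2 x : c1 <= x <= c2 -> p + q*c1 < 0 -> p + q*c2 < 0 -> p + q*x < 0.
Proof. intros h a b. pose proof (lin_pos (-p) (-q) c1 c2 x h). lra. Qed.

Lemma part2 r R0 : 0 < R0 ->
   let z := fun phi : R => Cminus (RtoC 1) (Cmult (RtoC R0) (cis (- phi))) in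
   let f := fun phi : R => - re_g0 (z phi) 0 r in
   forall a b : R, a < b ->
   (forall phi, a <= phi <= b -> nonsingular (z phi)) ->
   ((0 <= a /\ b <= PI) ->
      ((forall phi, a <= phi <= b -> 0 < Qfun R0 r phi) -> decreasing_on f a b) /\
      ((forall phi, a <= phi <= b -> Qfun R0 r phi < 0) -> increasing_on f a b)) /\
   ((PI <= a /\ b <= 2 * PI) ->
      ((forall phi, a <= phi <= b -> 0 < Qfun R0 r phi) -> increasing_on f a b) /\
      ((forall phi, a <= phi <= b -> Qfun R0 r phi < 0) -> decreasing_on f a b)).
Proof.
  intros hR z f a b hab hns.
  assert (rep : forall t, a <= t <= b -> f t =
     - ((1 / 2 - 1 / (2 * sqrt 2) - 0) * ln R0
     + ((r - 2 * 0) * ln (sqrt 2 + 1) - ln 2 / 2)) + h2 R0 r (cos t)).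
  { intros t ht. unfold f, h2, z. apply p2_rep; auto. apply hns; auto. }
  assert (pos : forall t, a <= t <= b -> 0 < 1 + R0^2 + (-2*R0)*cos t /\ 0 < 4 + R0^2 + (-4*R0)*cos t).
  { intros t ht. split; [apply p2_pos1|apply p2_pos2]; auto; apply hns; auto. }
  split; intros [ha hb]; split; intros HC x y hx hxy hy;
    assert (hx' : a <= x <= b) by lra; assert (hy' : a <= y <= b) by lra;
    rewrite (rep x hx'), (rep y hy');
    destruct (pos x hx') as [px1 px2]; destruct (pos y hy') as [py1 py2];
    pose proof (HC x hx') as Cx; pose proof (HC y hy') as Cy;
    rewrite Qfun_lin in Cx, Cy.
  - assert (hcos : cos y < cos x) by (apply cos_decreasing_1; lra).
    destruct (h2_mono R0 r (cos y) (cos x) hR hcos py1 px1 py2 px2) as [P _].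
    enough (h2 R0 r (cos y) < h2 R0 r (cos x)) by lra. apply P.
    intros w hw. apply (lin_pos _ _ (cos y) (cos x)); auto; lra.
  - assert (hcos : cos y < cos x) by (apply cos_decreasing_1; lra).
    destruct (h2_mono R0 r (cos y) (cos x) hR hcos py1 px1 py2 px2) as [_ N].
    enough (h2 R0 r (cos x) < h2 R0 r (cos y)) by lra. apply N.
    intros w hw. apply (lin_neg _ _ (cos y) (cos x)); auto; lra.
  - assert (hcos : cos x < cos y) by (apply cos_increasing_1; lra).
    destruct (h2_mono R0 r (cos x) (cos y) hR hcos px1 py1 px2 py2) as [P _].
    enough (h2 R0 r (cos x) < h2 R0 r (cos y)) by lra. apply P.
    intros w hw. apply (lin_pos _ _ (cos x) (cos y)); auto; lra.
  - assert (hcos : cos x < cos y) by (apply cos_increasing_1; lra).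
    destruct (h2_mono R0 r (cos x) (cos y) hR hcos px1 py1 px2 py2) as [_ N].
    enough (h2 R0 r (cos y) < h2 R0 r (cos x)) by lra. apply N.
    intros w hw. apply (lin_neg _ _ (cos x) (cos y)); auto; lra.
Qed.

Theorem lemma8p1 (r : R) :
  (forall rho : R, 0 < rho ->
   let f := fun t : R => re_g0 (Cmult (RtoC rho) (cis t)) 0 r in
   let cond := fun t : R => cos t < (1 + rho ^ 2) / (2 * sqrt 2 * rho) in
   forall a b : R, a < b ->
   (forall t, a <= t <= b -> nonsingular (Cmult (RtoC rho) (cis t))) ->
   ((0 <= a /\ b <= PI) ->
      ((forall t, a <= t <= b -> cond t) -> decreasing_on f a b) /\
      ((forall t, a <= t <= b -> ~ cond t) -> increasing_on f a b)) /\
   ((PI <= a /\ b <= 2 * PI) ->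
      ((forall t, a <= t <= b -> cond t) -> increasing_on f a b) /\
      ((forall t, a <= t <= b -> ~ cond t) -> decreasing_on f a b)))
  /\
  (forall R0 : R, 0 < R0 ->
   let z := fun phi : R => Cminus (RtoC 1) (Cmult (RtoC R0) (cis (- phi))) in
   let f := fun phi : R => - re_g0 (z phi) 0 r in
   forall a b : R, a < b ->
   (forall phi, a <= phi <= b -> nonsingular (z phi)) ->
   ((0 <= a /\ b <= PI) ->
      ((forall phi, a <= phi <= b -> 0 < Qfun R0 r phi) -> decreasing_on f a b) /\
      ((forall phi, a <= phi <= b -> Qfun R0 r phi < 0) -> increasing_on f a b)) /\
   ((PI <= a /\ b <= 2 * PI) ->
      ((forall phi, a <= phi <= b -> 0 < Qfun R0 r phi) -> increasing_on f a b) /\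
      ((forall phi, a <= phi <= b -> Qfun R0 r phi < 0) -> decreasing_on f a b))).
Proof.
  split.
  - intros rho h. exact (part1 r rho h).
  - intros R0 h. exact (part2 r R0 h).
Qed.
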